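(* Let $\mathcal{S}=\langle\mathcal{L},\vdash\rangle$ be a Hilbert-style logic, with left variable inclusion companion $\mathcal{S}^l=\langle\mathcal{L},\vdash^l\rangle$ and restricted rules companion $\mathcal{S}^{re}=\langle\mathcal{L},\vdash^{re}\rangle$. Then $\vdash^l\,=\,\vdash^{re}$ if and only if $(\vdash^{re})^l\,=\,\vdash^l$; that is, $\vdash^l\,=\,\vdash^{re}$ holds iff for all $\Gamma\cup\{\alpha\}\subseteq\mathcal{L}$: $\Gamma\vdash^l\alpha$ iff there exists $\Delta\subseteq\Gamma$ such that $\mathrm{var}(\Delta)\subseteq\mathrm{var}(\alpha)$ and $\Delta\vdash^{re}\alpha$.
   Context: A logic is a pair $\langle\mathcal{L},\vdash\rangle$ where $\mathcal{L}$ is the formula algebra over a set of variables $V$ of some finite signature, and $\vdash\subseteq\mathcal{P}(\mathcal{L})\times\mathcal{L}$ is an arbitrary relation (written $\Gamma\vdash\alpha$). For $\alpha\in\mathcal{L}$, $\mathrm{var}(\alpha)$ is the set of variables occurring in $\alpha$, and $\mathrm{var}(\Delta)=\bigcup_{\alpha\in\Delta}\mathrm{var}(\alpha)$. A Hilbert-style logic is one given by a set of axioms $A\subseteq\mathcal{L}$ and a set of rules of inference $R\subseteq\mathcal{P}(\mathcal{L})\times\mathcal{L}$ (a rule $(\Gamma,\alpha)$ is written $\frac{\Gamma}{\alpha}$): $\Sigma\vdash\alpha$ iff there is a finite sequence $\alpha_1,\ldots,\alpha_n=\alpha$ such that each $\alpha_i$ is in $A$, or in $\Sigma$, or there is a rule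 $(\Delta,\alpha_i)\in R$ with $\Delta\subseteq\{\alpha_1,\ldots,\alpha_{i-1}\}$. For any logic $\mathcal{S}=\langle\mathcal{L},\vdash\rangle$, its left variable inclusion companion $\langle\mathcal{L},\vdash^l\rangle$ is defined by: $\Gamma\vdash^l\alpha$ iff there is $\Delta\subseteq\Gamma$ with $\mathrm{var}(\Delta)\subseteq\mathrm{var}(\alpha)$ and $\Delta\vdash\alpha$. For a Hilbert-style logic with axioms $A$ and rules $R$, its restricted rules companion $\langle\mathcal{L},\vdash^{re}\rangle$ is the Hilbert-style logic with axioms $A$ and rules $\{(\Gamma,\alpha)\in R\mid \mathrm{var}(\Gamma)\subseteq\mathrm{var}(\alpha)\}$. Here $(\vdash^{re})^l$ denotes the left variable inclusion companion of $\langle\mathcal{L},\vdash^{re}\rangle$. *)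

(* Defs.v *)
From mathcomp Require Import all_boot.
From Stdlib Require Import List.
Set Implicit Arguments. Unset Strict Implicit.

Inductive formula (V : Type) (Sig : finType) (ar : Sig -> nat) : Type :=
| Var : V -> formula V ar
| App : forall c : Sig, ('I_(ar c) -> formula V ar) -> formula V ar.

Section Defs.
Variables (V : Type) (Sig : finType) (ar : Sig -> nat).
Notation F := (formula V ar).

Fixpoint var (a : F) (x : V) : Prop :=
  match a with
  | Var y => x = y
  | App c f => exists i, var (f i) x
  end.

Definition varset (D : F -> Prop) (x : V) : Prop := exists a, D a /\ var a x.

Definition cons_rel := (F -> Prop) -> F -> Prop.

Definition justified (A : F -> Prop) (R : (F -> Prop) -> F -> Prop)
  (S : F -> Prop) (prev : list F) (b : F) : Prop :=
  A b \/ S b \/ exists D, R D b /\ (forall d, D d -> In d prev).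

(* Hilbert-style derivability: a finite sequence alpha_1,...,alpha_n = alpha
   each member justified (here the sequence is s ++ [alpha]). *)
Definition hilbert (A : F -> Prop) (R : (F -> Prop) -> F -> Prop) : cons_rel :=
  fun S a => exists s : list F,
    forall i, i < length (s ++ a :: nil) ->
      justified A R S (firstn i (s ++ a :: nil)) (nth i (s ++ a :: nil) a).

Definition lvi (vd : cons_rel) : cons_rel :=
  fun G a => exists D : F -> Prop,
    (forall d, D d -> G d) /\ (forall x, varset D x -> var a x) /\ vd D a.

Definition restrict_rules (R : (F -> Prop) -> F -> Prop) : (F -> Prop) -> F -> Prop :=
  fun G a => R G a /\ (forall x, varset G x -> var a x).

Definition rel_eq (r1 r2 : cons_rel) : Prop := forall G a, r1 G a <-> r2 G a.
End Defs.

(* Main.v *)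
From Stdlib Require Import List Classical ClassicalEpsilon.
Require Import Defs.
From mathcomp Require Import all_boot.
Set Implicit Arguments. Unset Strict Implicit.

Section K.
Variables (V : Type) (Sig : finType) (ar : Sig -> nat).
Notation F := (formula V ar).
Variables (A : F -> Prop) (R : (F -> Prop) -> F -> Prop).

Fixpoint ok (S : F -> Prop) (prev : list F) (t : list F) : Prop :=
  match t with
  | nil => True
  | b :: r => justified A R S prev b /\ ok S (app prev (b :: nil)) r
  end.

Lemma ok_iff S d : forall t prev,
  (forall i, i < length t -> justified A R S (app prev (List.firstn i t)) (List.nth i t d))
  <-> ok S prev t.
Proof.
elim=> [|b t IH] prev /=; first by split.
split.
- move=> H; split.
  + by have := H 0 isT; rewrite /= app_nil_r.
  + apply/IH => i Hi; have := H i.+1 Hi; by rewrite /= -app_assoc.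
- case=> Hb /IH Ht [|i] Hi /=; first by rewrite app_nil_r.
  by move: (Ht i Hi); rewrite -app_assoc /=.
Qed.

Lemma hilbert_ok S a : hilbert A R S a <-> exists s, ok S nil (app s (a :: nil)).
Proof.
split=> [[s Hs]|[s Hs]]; exists s.
- by apply/(ok_iff S a); exact: Hs.
- by move: Hs => /(ok_iff S a) H i Hi; exact: H.
Qed.
Lemma ok_mono (S S' : F -> Prop) : (forall b, S b -> S' b) ->
  forall t prev, ok S prev t -> ok S' prev t.
Proof.
move=> HS; elim=> [|b t IH] prev //= [Hb Ht]; split; last exact: IH.
case: Hb => [?|[?|?]]; [left|right;left|right;right]; auto.
Qed.
End K.

Section Main.
Variables (V : Type) (Sig : finType) (ar : Sig -> nat).
Notation F := (formula V ar).
Variables (A : F -> Prop) (R : (F -> Prop) -> F -> Prop).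


Lemma ok_filter (G : F -> Prop) (P : F -> Prop) (p : F -> bool)
  (hp : forall x, p x = true <-> P x)
  (hP : forall D b, restrict_rules R D b -> P b -> forall d, D d -> P d) :
  forall t prev prev', ok A (restrict_rules R) G prev t ->
    (forall d, In d prev -> P d -> In d prev') ->
    ok A (restrict_rules R) (fun b => G b /\ P b) prev' (List.filter p t).
Proof.
elim=> [|b t IH] prev prev' //= [Hb Ht] Hin.
case E: (p b) => /=.
- have Pb : P b by apply/hp.
  split.
  + case: Hb => [?|[?|[D [HD HDp]]]]; [left|right;left|right;right]; auto.
    exists D; split=> // d Dd; apply: Hin; first exact: HDp.
    exact: (hP D b HD Pb d Dd).
  + apply: (IH _ _ Ht) => d; rewrite !in_app_iff /= => -[H|[H|[]]] Pd.
    * by left; apply: Hin.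
    * by right; left.
- apply: (IH _ _ Ht) => d; rewrite in_app_iff /= => -[H|[H|[]]] Pd.
  + by apply: Hin.
  + subst d; move/hp: Pd; by rewrite E.
Qed.

Lemma keyK : rel_eq (lvi (hilbert A (restrict_rules R))) (hilbert A (restrict_rules R)).
Proof.
move=> G a; split.
- case=> D [HDG [_ /hilbert_ok [s Hs]]]; apply/hilbert_ok; exists s.
  exact: (ok_mono HDG Hs).
- move=> /hilbert_ok [s Hs].
  pose P := fun b : F => forall x, var b x -> var a x.
  pose p := fun b => if excluded_middle_informative (P b) then true else false.
  have hp : forall x, p x = true <-> P x.
    by move=> x; rewrite /p; case: excluded_middle_informative.
  exists (fun b => G b /\ P b); split; first by move=> d [].
  split; first by move=> x [b [[_ Pb] vb]]; exact: Pb.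
  apply/hilbert_ok; exists (List.filter p s).
  have Pa : p a = true by apply/hp.
  have -> : app (List.filter p s) (a :: nil) = List.filter p (app s (a :: nil)).
    by rewrite filter_app /= Pa.
  apply: (ok_filter hp _ Hs) => //.
  move=> D b [_ HD] Pb d Dd x vx; apply: Pb; apply: HD; by exists d.
Qed.
End Main.

Theorem theorem2p7 (V : Type) (Sig : finType) (ar : Sig -> nat)
  (A : formula V ar -> Prop)
  (R : (formula V ar -> Prop) -> formula V ar -> Prop) :
  rel_eq (lvi (hilbert A R)) (hilbert A (restrict_rules R)) <->
  rel_eq (lvi (hilbert A (restrict_rules R))) (lvi (hilbert A R)).
Proof.
have K := keyK A R.
split=> H G a.
- by rewrite K H.
- by rewrite -K H.
Qed.
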